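(* Let $K\subset M^{m\times n}$ be a three-dimensional subspace without Rank-$1$ connections, with $K=P_K(\mathbb{R}^3)$ where $P_K(z)=(a_{ij}\cdot z)_{ij}$, $a_{ij}\in\mathbb{R}^3$, is a linear isomorphism onto $K$. If $\dim\mathrm{Span}\{a_{i_0l}:l=1,\dots,n\}=3$ for some $i_0$, or $\dim\mathrm{Span}\{a_{lj_0}:l=1,\dots,m\}=3$ for some $j_0$, then there exists $\beta\in\mathbb{R}^{q_0}\setminus\{0\}$ with $\sum_{k=1}^{q_0}\beta_kM_k(X)\ge0$ for all $X\in K$ and $\sum_k\beta_kM_k\not\equiv0$ on $K$, where $M_1,\dots,M_{q_0}$ are all the $2\times2$ minors of $m\times n$ matrices.
   Context: A set has Rank-$1$ connections if it contains $A\ne B$ with $\mathrm{Rank}(A-B)=1$. *)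

(* Defs.v *)
From HB Require Import structures.
From mathcomp Require Import all_boot all_order all_algebra.
From mathcomp Require Import reals.
Set Implicit Arguments. Unset Strict Implicit. Unset Printing Implicit Defensive.
Import Order.TTheory GRing.Theory Num.Theory.
Local Open Scope ring_scope.

Definition PK (R : realType) (m n : nat) (a : 'I_m -> 'I_n -> 'rV[R]_3)
  (z : 'rV[R]_3) : 'M[R]_(m, n) :=
  \matrix_(i < m, j < n) \sum_(k < 3) a i j 0 k * z 0 k.

Definition has_rank1_connections (R : realType) (m n : nat)
  (S : 'M[R]_(m, n) -> Prop) : Prop :=
  exists A B, S A /\ S B /\ A <> B /\ \rank (A - B) = 1%N.

(* Index type for 2x2 minors: (i1, i2, j1, j2) with i1 < i2, j1 < j2. *)
Definition minor_idx (m n : nat) := ('I_m * 'I_m * ('I_n * 'I_n))%type.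

Definition valid_minor (m n : nat) (k : minor_idx m n) : bool :=
  (k.1.1 < k.1.2)%N && (k.2.1 < k.2.2)%N.

Definition minor2 (R : realType) (m n : nat) (k : minor_idx m n)
  (X : 'M[R]_(m, n)) : R :=
  X k.1.1 k.2.1 * X k.1.2 k.2.2 - X k.1.1 k.2.2 * X k.1.2 k.2.1.

Definition minor_comb (R : realType) (m n : nat) (beta : minor_idx m n -> R)
  (X : 'M[R]_(m, n)) : R :=
  \sum_(k : minor_idx m n | valid_minor k) beta k * minor2 k X.

(* Main.v *)
Require Import Defs.
From HB Require Import structures.
From mathcomp Require Import all_boot all_order all_algebra.
From mathcomp Require Import reals.
From mathcomp Require Import polyrcf ring lra.
From mathcomp Require Import classical_sets topology normedtype derive.
Require Stdlib.Logic.Classical_Prop.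
Import Order.TTheory GRing.Theory Num.Theory numFieldNormedType.Exports.
Local Open Scope ring_scope.


Section Alg.
Context {R : realFieldType}.
Implicit Types (X Y D E : 'M[R]_3) (u v w : 'rV[R]_3).

Definition bil X u v := \sum_i \sum_j u 0 i * X i j * v 0 j.
Definition qf X w := bil X w w.
Definition fro X Y := \sum_i \sum_j X i j * Y i j.
Definition outer (p q : 'rV[R]_3) : 'M[R]_3 := \matrix_(i, j) (p 0 i * q 0 j).
Definition inT X := (forall i j, X j i = X i j) /\ (forall w, 0 <= qf X w) /\
   \tr X = 1.

Lemma bilDl X u v w : bil X (u + v) w = bil X u w + bil X v w.
Proof.
rewrite /bil -big_split; apply: eq_bigr => i _; rewrite -big_split.
by apply: eq_bigr => j _; rewrite !mxE /=; ring.
Qed.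
Lemma bilDr X u v w : bil X w (u + v) = bil X w u + bil X w v.
Proof.
rewrite /bil -big_split; apply: eq_bigr => i _; rewrite -big_split.
by apply: eq_bigr => j _; rewrite !mxE /=; ring.
Qed.
Lemma bilNl X u w : bil X (- u) w = - bil X u w.
Proof.
rewrite /bil -sumrN; apply: eq_bigr => i _; rewrite -sumrN.
by apply: eq_bigr => j _; rewrite !mxE /=; ring.
Qed.
Lemma bilNr X u w : bil X w (- u) = - bil X w u.
Proof.
rewrite /bil -sumrN; apply: eq_bigr => i _; rewrite -sumrN.
by apply: eq_bigr => j _; rewrite !mxE /=; ring.
Qed.

Lemma sum_delta (F : 'I_3 -> R) i : \sum_p (delta_mx 0 i : 'rV[R]_3) 0 p * F p = F i.
Proof.
rewrite (bigD1 i) //= big1 => [|p /negbTE pi]; first by rewrite mxE !eqxx mul1r addr0.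
by rewrite mxE pi andbF mul0r.
Qed.
Lemma sum_delta_r (F : 'I_3 -> R) i : \sum_p F p * (delta_mx 0 i : 'rV[R]_3) 0 p = F i.
Proof. by rewrite -[RHS](sum_delta F i); apply: eq_bigr => p _; rewrite mulrC. Qed.

Lemma bil_delta X i j : bil X (delta_mx 0 i) (delta_mx 0 j) = X i j.
Proof.
rewrite /bil (eq_bigr (fun p => (delta_mx 0 i : 'rV[R]_3) 0 p * (\sum_q X p q * (delta_mx 0 j : 'rV[R]_3) 0 q))).
  by rewrite sum_delta sum_delta_r.
by move=> p _; rewrite mulr_sumr; apply: eq_bigr => q _; rewrite mulrA.
Qed.

Lemma qf_diag X i : qf X (delta_mx 0 i) = X i i.
Proof. exact: bil_delta. Qed.

Lemma qfD X Y w : qf (X + Y) w = qf X w + qf Y w.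
Proof.
rewrite /qf /bil -big_split; apply: eq_bigr => i _; rewrite -big_split.
by apply: eq_bigr => j _; rewrite !mxE /=; ring.
Qed.
Lemma qfB X Y w : qf (X - Y) w = qf X w - qf Y w.
Proof.
rewrite /qf /bil -sumrB; apply: eq_bigr => i _; rewrite -sumrB.
by apply: eq_bigr => j _; rewrite !mxE /=; ring.
Qed.
Lemma qfZ (c : R) X w : qf (c *: X) w = c * qf X w.
Proof.
rewrite /qf /bil mulr_sumr; apply: eq_bigr => i _; rewrite mulr_sumr.
by apply: eq_bigr => j _; rewrite !mxE /=; ring.
Qed.
Lemma qf_sum (I : finType) (F : I -> 'M[R]_3) w :
  qf (\sum_k F k) w = \sum_k qf (F k) w.
Proof.
apply: (big_rec2 (fun y1 y2 => qf y1 w = y2)).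
  by rewrite /qf /bil big1 // => i _; rewrite big1 // => j _; rewrite mxE mulr0 mul0r.
by move=> k y1 y2 _ <-; rewrite qfD.
Qed.
Lemma qf_tr X w : qf X^T w = qf X w.
Proof.
rewrite /qf /bil exchange_big; apply: eq_bigr => i _; apply: eq_bigr => j _.
by rewrite mxE; ring.
Qed.
Lemma qf_outer (p q w : 'rV[R]_3) :
  qf (outer p q) w = (\sum_i w 0 i * p 0 i) * (\sum_j q 0 j * w 0 j).
Proof.
rewrite /qf /bil mulr_suml; apply: eq_bigr => i _; rewrite mulr_sumr.
by apply: eq_bigr => j _; rewrite !mxE /=; ring.
Qed.

Lemma froDr D X Y : fro D (X + Y) = fro D X + fro D Y.
Proof.
rewrite /fro -big_split; apply: eq_bigr => i _; rewrite -big_split.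
by apply: eq_bigr => j _; rewrite !mxE /=; ring.
Qed.
Lemma froBr D X Y : fro D (X - Y) = fro D X - fro D Y.
Proof.
rewrite /fro -sumrB; apply: eq_bigr => i _; rewrite -sumrB.
by apply: eq_bigr => j _; rewrite !mxE /=; ring.
Qed.
Lemma froDl D X Y : fro (X + Y) D = fro X D + fro Y D.
Proof.
rewrite /fro -big_split; apply: eq_bigr => i _; rewrite -big_split.
by apply: eq_bigr => j _; rewrite !mxE /=; ring.
Qed.
Lemma froZr (c : R) D X : fro D (c *: X) = c * fro D X.
Proof.
rewrite /fro mulr_sumr; apply: eq_bigr => i _; rewrite mulr_sumr.
by apply: eq_bigr => j _; rewrite !mxE /=; ring.
Qed.
Lemma fro_sumr (I : finType) (F : I -> 'M[R]_3) D :
  fro D (\sum_k F k) = \sum_k fro D (F k).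
Proof.
apply: (big_rec2 (fun y1 y2 => fro D y1 = y2)).
  by rewrite /fro big1 // => i _; rewrite big1 // => j _; rewrite mxE mulr0.
by move=> k y1 y2 _ <-; rewrite froDr.
Qed.
Lemma fro_trl D X : fro D^T X = fro D X^T.
Proof.
rewrite /fro exchange_big; apply: eq_bigr => i _; apply: eq_bigr => j _.
by rewrite !mxE.
Qed.
Lemma fro_outer D w : fro D (outer w w) = qf D w.
Proof.
rewrite /fro /qf /bil; apply: eq_bigr => i _; apply: eq_bigr => j _.
by rewrite !mxE /=; ring.
Qed.
Lemma fro_outer_gen D p q : fro D (outer p q) = (p *m D *m q^T) 0 0.
Proof.
rewrite /fro mxE; under [RHS]eq_bigr do rewrite mxE.
rewrite exchange_big /=; apply: eq_bigr => i _.
rewrite mulr_suml; apply: eq_bigr => j _; rewrite !mxE /=; ring.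
Qed.
Lemma fro_ge0 D : 0 <= fro D D.
Proof.
by apply: sumr_ge0 => i _; apply: sumr_ge0 => j _; rewrite -expr2 sqr_ge0.
Qed.
Lemma single_le_sum (I : finType) (F : I -> R) i :
  (forall j, 0 <= F j) -> F i <= \sum_j F j.
Proof. by move=> H; rewrite (bigD1 i) //= lerDl sumr_ge0. Qed.

Lemma fro_eq0 D : fro D D = 0 -> D = 0.
Proof.
move=> H; apply/matrixP => i j; rewrite mxE.
have h1 : D i j * D i j <= \sum_j0 D i j0 * D i j0.
  by apply: (single_le_sum _ (fun j0 => D i j0 * D i j0) j) => k; rewrite -expr2 sqr_ge0.
have h2 : \sum_j0 D i j0 * D i j0 <= fro D D.
  apply: (single_le_sum _ (fun i0 => \sum_j0 D i0 j0 * D i0 j0) i) => k.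
  by apply: sumr_ge0 => l _; rewrite -expr2 sqr_ge0.
rewrite H in h2; nra.
Qed.
Lemma fro_sym X Y : fro X Y = fro Y X.
Proof. by rewrite /fro; apply: eq_bigr => i _; apply: eq_bigr => j _; rewrite mulrC. Qed.
Lemma froZl (c : R) D X : fro (c *: X) D = c * fro X D.
Proof. by rewrite fro_sym froZr fro_sym. Qed.
Lemma fro_expand D E (s : R) :
  fro (D + s *: E) (D + s *: E) = fro D D + 2 * s * fro D E + s ^+ 2 * fro E E.
Proof.
rewrite froDl !froDr !froZl !froZr (fro_sym E D); ring.
Qed.

Lemma inT_diag X i : inT X -> 0 <= X i i <= 1.
Proof.
move=> [Hs [Hq Ht]]; have d i' : 0 <= X i' i' by rewrite -qf_diag.
rewrite d /= -Ht; exact: (single_le_sum _ (fun k => X k k) i).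
Qed.

Lemma inT_bound X i j : inT X -> `|X i j| <= 1.
Proof.
move=> HT; have [Hs [Hq Ht]] := HT.
have /andP [a0 a1] := inT_diag _ i HT; have /andP [b0 b1] := inT_diag _ j HT.
have e1 := Hq (delta_mx 0 i + delta_mx 0 j).
have e2 := Hq (delta_mx 0 i - delta_mx 0 j).
rewrite /qf !(bilDl, bilDr, bilNl, bilNr) !bil_delta (Hs i j) in e1 e2.
rewrite ler_norml; apply/andP; split; lra.
Qed.

Lemma L1 (a b : R) : 0 <= b ->
  (forall s, 0 < s -> s <= 1 -> 0 <= 2 * s * a + s ^+ 2 * b) -> 0 <= a.
Proof.
move=> b0 H; rewrite leNgt; apply/negP => a0.
pose s := - a / (b - a).
have ba : 0 < b - a by lra.
have hs : s * (b - a) = - a by rewrite /s mulfVK // gt_eqF.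
have s0 : 0 < s by rewrite /s divr_gt0 // oppr_gt0.
have s1 : s <= 1 by rewrite /s ler_pdivrMr // mul1r; lra.
have := H s s0 s1.
have -> : s ^+ 2 * b = s * (- a) + s ^+ 2 * a by rewrite -hs; ring.
nra.
Qed.

Lemma L2 (a b t : R) : 0 < t -> t <= 1 -> 0 <= b ->
  (forall s, `|s| <= t -> 0 <= s ^+ 2 * b - 2 * s * a) -> a = 0.
Proof.
move=> t0 t1 b0 H; apply/eqP; apply: contraT => a0.
have na : 0 < `|a| by rewrite normr_gt0.
pose u := t * `|a| / (`|a| + b + 1).
have d0 : 0 < `|a| + b + 1 by lra.
have u0 : 0 < u by rewrite /u divr_gt0 // mulr_gt0.
have ut : u <= t.
  rewrite /u ler_pdivrMr // ler_pM2l //; lra.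
have hu : u * (`|a| + b + 1) = t * `|a| by rewrite /u mulfVK // gt_eqF.
have h1 := H u; have h2 := H (- u).
rewrite gtr0_norm // in h1; rewrite normrN gtr0_norm // in h2.
have {h1 h2} : 2 * `|a| <= u * b.
  have := h1 ut; have := h2 ut.
  case: (ler0P a) => ha; rewrite ?(ler0_norm ha) ?(gtr0_norm ha); nra.
have : u * b < `|a|.
  have : u * b * (`|a| + b + 1) < `|a| * (`|a| + b + 1).
    rewrite -mulrA [b * _]mulrC mulrA hu.
    have tb : t * b <= b by nra.
    have : t * `|a| * b <= `|a| * b by rewrite -mulrA [`|a| * b]mulrC mulrA ler_pM2r //; nra.
    nra.
  by rewrite ltr_pM2r.
lra.
Qed.

End Alg.

Section AnaSec.
Local Open Scope classical_set_scope.
Section S.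
Context {R : realType}.
Context {N : nat}.
Implicit Types (f g : 'rV[R]_N -> R).
Lemma cC (c : R) : continuous (fun _ : 'rV[R]_N => c).
Proof. exact: cst_continuous. Qed.
Lemma cK k : continuous (fun v : 'rV[R]_N => v 0 k).
Proof. exact: coord_continuous. Qed.
Lemma cDf f g : continuous f -> continuous g -> continuous (fun v => f v + g v).
Proof. move=> hf hg x; exact: (continuousD (hf x) (hg x)). Qed.
Lemma cMf f g : continuous f -> continuous g -> continuous (fun v => f v * g v).
Proof. move=> hf hg x; exact: (continuousM (hf x) (hg x)). Qed.
Lemma cBf f g : continuous f -> continuous g -> continuous (fun v => f v - g v).
Proof. move=> hf hg x; exact: (continuousB (hf x) (hg x)). Qed.
Lemma cSum (I : Type) (r : seq I) (P : pred I) (F : I -> 'rV[R]_N -> R) :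
  (forall i, continuous (F i)) -> continuous (fun v => \sum_(i <- r | P i) F i v).
Proof.
move=> hF; elim: r => [|i r IH].
  have -> : (fun v => \sum_(i <- [::] | P i) F i v) = fun=> 0.
    by apply: boolp.funext => v; rewrite big_nil.
  exact: cC.
have -> : (fun v => \sum_(j <- i :: r | P j) F j v) =
   fun v => (if P i then F i v else 0) + \sum_(j <- r | P j) F j v.
  by apply: boolp.funext => v; rewrite big_cons; case: (P i); rewrite ?add0r.
apply: cDf => //.
case: (P i); [exact: hF | exact: cC].
Qed.
Lemma closed_eqf f (c : R) : continuous f -> closed [set v | f v = c].
Proof. move=> hf; apply: (preimage_closed (f:=f) (D:=[set x | x = c])).
  by move=> x _; exact: hf.
exact: closed_eq. Qed.
Lemma closed_eqff f g : continuous f -> continuous g -> closed [set v | f v = g v].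
Proof.
move=> hf hg; have -> : [set v | f v = g v] = [set v | f v - g v = 0].
  by apply/seteqP; split => v /=; [move=> ->; rewrite subrr | move/eqP; rewrite subr_eq0 => /eqP].
by apply: closed_eqf; apply: cBf.
Qed.
Lemma closed_lef f (c : R) : continuous f -> closed [set v | f v <= c].
Proof. move=> hf; apply: (preimage_closed (f:=f) (D:=[set x | x <= c])).
  by move=> x _; exact: hf.
exact: closed_le. Qed.
Lemma closed_gef f (c : R) : continuous f -> closed [set v | c <= f v].
Proof. move=> hf; apply: (preimage_closed (f:=f) (D:=[set x | c <= x])).
  by move=> x _; exact: hf.
exact: closed_ge. Qed.
Lemma closed_all (I : Type) (P : I -> set 'rV[R]_N) :
  (forall i, closed (P i)) -> closed [set v | forall i, P i v].
Proof.
move=> hP; have -> : [set v | forall i, P i v] = \bigcap_(i in setT) P i.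
  by apply/seteqP; split => v /= H i //; apply: H.
by apply: closed_bigI => i _; exact: hP.
Qed.
Lemma bounded_entries (A : set 'rV[R]_N) (B : R) : 0 <= B ->
  (forall v, A v -> forall k, `|v 0 k| <= B) -> bounded_set A.
Proof.
move=> B0 HA.
exists B; split; first by rewrite num_real.
move=> M HM v Av.
change (mx_norm v <= M); rewrite mx_normrE.
apply: bigmax_le => [|[i k] _]; first by apply: le_trans B0 (ltW HM).
by rewrite /= [i]ord1; apply: le_trans (HA _ Av k) (ltW HM).
Qed.
End S.

End AnaSec.
Section DualSec.
Local Open Scope classical_set_scope.

Lemma dual (R : realType) (N : nat) (M : 'M[R]_(N, 3 * 3)) :
  (forall k, (vec_mx (row k M))^T = vec_mx (row k M)) ->
  (forall y : 'rV[R]_(3 * 3), (y <= M)%MS ->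
     (forall w, 0 <= qf (vec_mx y) w) -> forall w, qf (vec_mx y) w = 0) ->
  exists Z : 'M[R]_3, (forall w, w != 0 -> 0 < qf Z w) /\ Z^T = Z /\
     (forall k, fro Z (vec_mx (row k M)) = 0).
Proof.
move=> Hsym H.
pose Xv (v : 'rV[R]_(3 * 3 + 3 * 3)) : 'M[R]_3 := vec_mx (lsubmx v).
pose Yv (v : 'rV[R]_(3 * 3 + 3 * 3)) : 'M[R]_3 := vec_mx (rsubmx v).
pose C := cokermx M.
pose A : set 'rV[R]_(3 * 3 + 3 * 3) :=
  [set v | (forall i j, Xv v j i = Xv v i j) /\ (forall w, 0 <= qf (Xv v) w) /\
      \tr (Xv v) = 1 /\ (forall j, (rsubmx v *m C) 0 j = 0) /\
      (forall i j, -5 <= Yv v i j /\ Yv v i j <= 5)].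
pose f v := fro (Xv v - Yv v) (Xv v - Yv v).
have cX i j : continuous (fun v => Xv v i j).
  have -> : (fun v => Xv v i j) =
      (fun v : 'rV[R]_(3 * 3 + 3 * 3) => v 0 (lshift _ (mxvec_index i j))).
    by apply: boolp.funext => v; rewrite /Xv !mxE.
  exact: cK.
have cY i j : continuous (fun v => Yv v i j).
  have -> : (fun v => Yv v i j) =
      (fun v : 'rV[R]_(3 * 3 + 3 * 3) => v 0 (rshift _ (mxvec_index i j))).
    by apply: boolp.funext => v; rewrite /Yv !mxE.
  exact: cK.
have cf : continuous f.
  have -> : f = fun v => \sum_i \sum_j (Xv v i j - Yv v i j) * (Xv v i j - Yv v i j).
    by apply: boolp.funext => v; rewrite /f /fro; apply: eq_bigr => i _;
      apply: eq_bigr => j _; rewrite !mxE.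
  by apply: cSum => i; apply: cSum => j; apply: cMf; apply: cBf.
have cq w : continuous (fun v => qf (Xv v) w).
  rewrite /qf /bil; apply: cSum => i; apply: cSum => j.
  by apply: cMf; [apply: cMf; [apply: cC | apply: cX] | apply: cC].
have Acl : closed A.
  apply: closedI.
    apply: closed_all => i; apply: closed_all => j; exact: closed_eqff.
  apply: closedI.
    by apply: closed_all => w; apply: closed_gef.
  apply: closedI.
    by apply: closed_eqf; rewrite /mxtrace; apply: cSum.
  apply: closedI.
    apply: closed_all => j; apply: closed_eqf.
    have -> : (fun v : 'rV[R]_(3 * 3 + 3 * 3) => (rsubmx v *m C) 0 j) =
      (fun v => \sum_k v 0 (rshift _ k) * C k j).
      by apply: boolp.funext => v; rewrite !mxE; apply: eq_bigr => k _; rewrite mxE.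
    by apply: cSum => k; apply: cMf; [apply: cK | apply: cC].
  apply: closed_all => i; apply: closed_all => j.
  by apply: closedI; [apply: closed_gef | apply: closed_lef].
have XvE x y : Xv (row_mx x y) = vec_mx x by rewrite /Xv row_mxKl.
have YvE x y : Yv (row_mx x y) = vec_mx y by rewrite /Yv row_mxKr.
have Aintro X Y : inT X -> (mxvec Y <= M)%MS -> (forall i j, -5 <= Y i j /\ Y i j <= 5) ->
    A (row_mx (mxvec X) (mxvec Y)).
  move=> [h1 [h2 h3]] hL hb; rewrite /A /= XvE YvE !mxvecK row_mxKr.
  split; first exact: h1. split; first exact: h2. split; first exact: h3.
  split; last exact: hb. move=> j.
  by move: hL; rewrite submxE => /eqP ->; rewrite mxE.
have Abd : bounded_set A.
  apply: (@bounded_entries _ _ _ 5) => // v [h1 [h2 [h3 [h4 h5]]]] k.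
  case: (split_ordP k) => k' ->.
    have -> : v 0 (lshift _ k') = mxvec (Xv v) 0 k' by rewrite /Xv vec_mxK mxE.
    case: (mxvec_indexP k') => i j; rewrite mxvecE.
    apply: le_trans (inT_bound _ i j (conj h1 (conj h2 h3))) _; lra.
  have -> : v 0 (rshift _ k') = mxvec (Yv v) 0 k' by rewrite /Yv vec_mxK mxE.
  case: (mxvec_indexP k') => i j; rewrite mxvecE ler_norml.
  by have [] := h5 i j => -> ->.

have I3T : inT (3^-1 *: 1%:M : 'M[R]_3).
  split; first by move=> i j; rewrite !mxE eq_sym.
  split.
    move=> w; rewrite qfZ; apply: mulr_ge0; first by rewrite invr_ge0; lra.
    rewrite /qf /bil; apply: sumr_ge0 => i _; apply: sumr_ge0 => j _.
    rewrite mxE; case: eqP => [->|_]; last by rewrite mulr0 mul0r.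
    by rewrite mulr1 -expr2 sqr_ge0.
  by rewrite mxtraceZ mxtrace1 mulVf // pnatr_eq0.

have A0 : A !=set0.
  exists (row_mx (mxvec (3^-1 *: 1%:M : 'M[R]_3)) (mxvec (0 : 'M[R]_3))).
  apply: Aintro; first exact: I3T.
    have /eqP -> : mxvec (0 : 'M[R]_(3,3)) == 0 by rewrite mxvec_eq0.
    exact: sub0mx.
  by move=> i j; rewrite mxE; lra.
have Acomp : compact A by apply: bounded_closed_compact.
have cfA : {within A, continuous f} by apply: continuous_subspaceT.
have [c cA cmin] := EVT_min_rV A0 Acomp cfA.
move: cA; rewrite inE => -[Xsym [Xpsd [Xtr [YL Ybox]]]].
set Xs := Xv c in Xsym Xpsd Xtr; set Ys := Yv c in Ybox.
pose D := Xs - Ys.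
have XT : inT Xs by split; [|split].
have YsL : (mxvec Ys <= M)%MS.
  rewrite /Ys /Yv vec_mxK submxE; apply/eqP/rowP => j; rewrite YL mxE //.
have fmin X Y : inT X -> (mxvec Y <= M)%MS -> (forall i j, -5 <= Y i j /\ Y i j <= 5) ->
    fro D D <= fro (X - Y) (X - Y).
  move=> hX hY hb; have := cmin _ (mem_set (Aintro X Y hX hY hb)).
  by rewrite /f XvE YvE !mxvecK.
have Ymin Y : (mxvec Y <= M)%MS -> (forall i j, -5 <= Y i j /\ Y i j <= 5) ->
    fro D D <= fro (Xs - Y) (Xs - Y).
  by move=> hY hb; apply: fmin.
have Xmin X : inT X -> fro D D <= fro (X - Ys) (X - Ys).
  move=> hX; apply: fmin => // i j; exact: Ybox.
have XB i j : -1 <= Xs i j <= 1 by rewrite -ler_norml; apply: inT_bound.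
have froXs : fro Xs Xs <= 9.
  have -> : 9 = \sum_(i < 3) \sum_(j < 3) (1 : R).
    by rewrite !sumr_const !card_ord -mulrnA.
  apply: ler_sum => i _; apply: ler_sum => j _.
  by have /andP [h1 h2] := XB i j; nra.
have DD9 : fro D D <= 9.
  apply: le_trans froXs.
  have := Ymin 0; rewrite subr0; apply.
    have /eqP -> : mxvec (0 : 'M[R]_(3,3)) == 0 by rewrite mxvec_eq0.
    exact: sub0mx.
  by move=> i j; rewrite mxE; lra.
have Dsq i j : D i j * D i j <= fro D D.
  apply: le_trans (_ : \sum_j0 D i j0 * D i j0 <= _).
    by apply: (single_le_sum _ (fun j0 => D i j0 * D i j0) j) => k; rewrite -expr2 sqr_ge0.
  apply: (single_le_sum _ (fun i0 => \sum_j0 D i0 j0 * D i0 j0) i) => k.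
  by apply: sumr_ge0 => l _; rewrite -expr2 sqr_ge0.
have YB i j : -4 <= Ys i j /\ Ys i j <= 4.
  have h9 := le_trans (Dsq i j) DD9; have /andP [h1 h2] := XB i j.
  have [hd1 hd2] : D i j <= 3 /\ -3 <= D i j.
    by move: h9; generalize (D i j) => d hd; split; nra.
  have DE : D i j = Xs i j - Ys i j by rewrite /D !mxE.
  rewrite DE in hd1 hd2; split; lra.
have frDQ k : fro D (vec_mx (row k M)) = 0.
  set Q := vec_mx (row k M).
  pose S := 1 + \sum_i \sum_j `|Q i j|.
  have S1 : 1 <= S by rewrite /S lerDl; apply: sumr_ge0 => i _; apply: sumr_ge0.
  have QS i j : `|Q i j| <= S.
    apply: le_trans (_ : \sum_i \sum_j `|Q i j| <= _); last by rewrite /S lerDr.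
    apply: le_trans (_ : \sum_j0 `|Q i j0| <= _).
      by apply: (single_le_sum _ (fun j0 => `|Q i j0|) j) => l.
    by apply: (single_le_sum _ (fun i0 => \sum_j0 `|Q i0 j0|) i) => l; apply: sumr_ge0.
  have S0 : 0 < S by lra.
  apply: (L2 _ (fro Q Q) (S^-1)); first by rewrite invr_gt0.
      by rewrite invr_le1 // unitfE gt_eqF.
    exact: fro_ge0.
  move=> s hs.
  have hQ : (mxvec (Ys + s *: Q) <= M)%MS.
    rewrite linearD linearZ /=; apply: addmx_sub; first exact: YsL.
    by rewrite /Q vec_mxK; apply: scalemx_sub; apply: row_sub.
  have hb : forall i j, -5 <= (Ys + s *: Q) i j /\ (Ys + s *: Q) i j <= 5.
    move=> i j.
    have -> : (Ys + s *: Q) i j = Ys i j + s * Q i j by rewrite !mxE.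
    have : `|s * Q i j| <= 1.
      rewrite normrM; apply: le_trans (_ : S^-1 * S <= 1); last by rewrite mulVf ?gt_eqF.
      by apply: ler_pM => //; apply: QS.
    rewrite ler_norml => /andP [h1 h2]; have := YB i j; lra.
  have := Ymin _ hQ hb.
  have -> : Xs - (Ys + s *: Q) = D + (- s) *: Q by rewrite /D scaleNr opprD addrA.
  rewrite fro_expand sqrrN; lra.
have frDYs : fro D Ys = 0.
  have [be Hbe] := submxP YsL.
  have -> : Ys = \sum_i be 0 i *: vec_mx (row i M).
    by rewrite -[Ys]mxvecK Hbe mulmx_sum_row linear_sum; apply: eq_bigr => i _; rewrite linearZ.
  by rewrite fro_sumr big1 // => i _; rewrite froZr frDQ mulr0.
have Xopt X : inT X -> fro D Xs <= fro D X.
  move=> [hs [hq ht]].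
  rewrite -subr_ge0 -froBr.
  apply: (L1 _ (fro (X - Xs) (X - Xs))); first exact: fro_ge0.
  move=> s s0 s1.
  have hT : inT (Xs + s *: (X - Xs)).
    split.
      move=> i j; have E i0 j0 : (Xs + s *: (X - Xs)) i0 j0 = Xs i0 j0 + s * (X i0 j0 - Xs i0 j0).
        by rewrite !mxE.
      by rewrite !E hs Xsym.
    split.
      move=> w; rewrite qfD qfZ qfB.
      have := Xpsd w; have := hq w; nra.
    by rewrite mxtraceD mxtraceZ raddfB /= ht Xtr subrr mulr0 addr0.
  have := Xmin _ hT.
  have -> : Xs + s *: (X - Xs) - Ys = D + s *: (X - Xs) by rewrite /D addrAC.
  rewrite fro_expand; lra.
have XsE : Xs = D + Ys by rewrite /D subrK.
have [DD0|DDpos] : fro D D = 0 \/ 0 < fro D D.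
  by have := fro_ge0 D; rewrite le_eqVlt => /orP [/eqP <-|]; [left|right].
  have D0 := fro_eq0 _ DD0.
  have XY : Xs = Ys by rewrite XsE D0 add0r.
  have Hq := H _ YsL; rewrite mxvecK -XY in Hq.
  have Hq0 := Hq Xpsd.
  exfalso; move: Xtr; rewrite /mxtrace (eq_bigr (fun i => qf Xs (delta_mx 0 i))).
    rewrite big1; first by move/eqP; rewrite eq_sym oner_eq0.
    by move=> i _; rewrite Hq0.
  by move=> i _; rewrite qf_diag.
exists (D + D^T).
split.
  move=> w w0.
  pose sw := \sum_i w 0 i * w 0 i.
  have sw0 : 0 < sw.
    rewrite lt_neqAle; apply/andP; split; last first.
      by apply: sumr_ge0 => i _; rewrite -expr2 sqr_ge0.
    apply: contra w0 => /eqP sw0; apply/eqP/rowP => k; rewrite mxE.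
    have : w 0 k * w 0 k <= sw.
      by apply: (single_le_sum _ (fun j0 => w 0 j0 * w 0 j0) k) => l; rewrite -expr2 sqr_ge0.
    by rewrite -sw0; move: (w 0 k) => x hx; nra.
  have hT : inT (sw^-1 *: outer w w).
    split; first by move=> i j; rewrite !mxE [w 0 j * _]mulrC.
    split.
      move=> u; rewrite qfZ qf_outer; apply: mulr_ge0; first by rewrite invr_ge0 ltW.
      have -> : \sum_j w 0 j * u 0 j = \sum_i u 0 i * w 0 i.
        by apply: eq_bigr => j _; rewrite mulrC.
      by rewrite -expr2 sqr_ge0.
    rewrite mxtraceZ /mxtrace (eq_bigr (fun i => w 0 i * w 0 i)); last by move=> i _; rewrite mxE.
    by rewrite mulVf // gt_eqF.
  have := Xopt _ hT.
  rewrite froZr fro_outer {1}XsE froDr frDYs addr0 => h.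
  have qD : 0 < qf D w.
    have h2 := lt_le_trans DDpos h.
    by rewrite pmulr_rgt0 ?invr_gt0 in h2.
  by rewrite qfD qf_tr; lra.
split; first by rewrite raddfD /= trmxK addrC.
move=> k; rewrite froDl fro_trl Hsym frDQ; lra.
Qed.

End DualSec.
Set Implicit Arguments. Unset Strict Implicit.

Lemma dim1_sub (F : fieldType) p n (V : 'M[F]_(p, n)) (z w : 'rV[F]_n) :
  \rank V = 1%N -> z != 0 -> (z <= V)%MS -> (w <= V)%MS -> exists c, w = c *: z.
Proof.
move=> rV z0 zV wV.
have := mxrank_leqif_sup zV; rewrite rank_rV z0 rV => -[_ /esym].
rewrite eqxx => Vz.
by apply/sub_rVP; apply: submx_trans wV Vz.
Qed.

Lemma nonzero_row (F : fieldType) p n (N : 'M[F]_(p, n)) :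
  N != 0 -> exists i, row i N != 0.
Proof.
move=> N0; apply/existsP; apply: contraR N0; rewrite negb_exists => /forallP H.
apply/eqP/row_matrixP => i; rewrite row0; by move: (H i); rewrite negbK => /eqP.
Qed.

Lemma common_eig (R : rcfType) (I : finType) (S : I -> 'M[R]_3) :
  (forall i j, S i *m S j = S j *m S i) ->
  exists2 z : 'rV[R]_3, z != 0 & forall i, exists c, z *m S i = c *: z.
Proof.
move=> Scomm.
case: (boolP [exists i, ~~ is_scalar_mx (S i)]) => [/existsP [i1 ns]|].
  have [lam rl] : {x | root (char_poly (S i1)) x}.
    by apply: odd_poly_root; rewrite size_char_poly.
  rewrite -eigenvalue_root_char in rl.
  have [v vS v0] := eigenvalueP rl.
  pose N := S i1 - lam%:M.
  have vN : v *m N = 0 by rewrite mulmxBr vS mul_mx_scalar subrr.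
  have NC j : S j *m N = N *m S j.
    by rewrite mulmxBr mulmxBl Scomm mul_mx_scalar mul_scalar_mx.
  have N0 : N != 0.
    apply: contra ns => /eqP HN; apply/is_scalar_mxP; exists lam.
    by apply/eqP; rewrite -subr_eq0; apply/eqP.
  have rk1 : (1 <= \rank N)%N by rewrite lt0n mxrank_eq0.
  have rk2 : (\rank N <= 2)%N.
    have : kermx N != 0.
      apply/eqP => K0; move: v0; rewrite (_ : v = 0) ?eqxx //.
      by apply/eqP; rewrite -submx0 -K0; apply/sub_kermxP.
    rewrite -mxrank_eq0 mxrank_ker.
    by case: (\rank N) (rank_leq_col N) => [|[|[|[|]]]].
  case: (ltnP (\rank N) 2) => rk.
    have rN : \rank N = 1%N by apply/eqP; rewrite eqn_leq -ltnS rk rk1.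
    have [i ri] := nonzero_row N0.
    exists (row i N) => // j.
    have : (row i N *m S j <= N)%MS.
      by rewrite -row_mul -NC row_mul; apply: submxMl.
    by move/(dim1_sub rN ri (row_sub i N)).
  have rK : \rank (kermx N) = 1%N.
    by rewrite mxrank_ker; have -> : \rank N = 2%N by apply/eqP; rewrite eqn_leq rk2 rk.
  exists v => // j.
  have vK : (v <= kermx N)%MS by apply/sub_kermxP.
  have : (v *m S j <= kermx N)%MS.
    by apply/sub_kermxP; rewrite -mulmxA NC mulmxA vN mul0mx.
  by move/(dim1_sub rK v0 vK).
rewrite negb_exists => /forallP H.
exists (delta_mx 0 0).
  by apply/eqP => /matrixP /(_ 0 0); rewrite !mxE /= => /eqP; rewrite oner_eq0.
move=> i; move: (H i); rewrite negbK => /is_scalar_mxP [c ->].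
by exists c; rewrite mul_mx_scalar.
Qed.


Lemma tr11 (R : nzRingType) (A : 'M[R]_1) : A^T = A.
Proof. by rewrite [A]mx11_scalar tr_scalar_mx. Qed.

Lemma rank1_from_Z (R : realType) m n (a : 'I_m -> 'I_n -> 'rV[R]_3)
   (Z : 'M[R]_3) (i0 : 'I_m) :
  Z \in unitmx -> Z^T = Z ->
  (forall i i' j k, a i j *m Z *m (a i' k)^T = a i k *m Z *m (a i' j)^T) ->
  \rank (\matrix_(l < n, k < 3) a i0 l 0 k) = 3%N ->
  exists z, \rank (PK a z) = 1%N.
Proof.
move=> Zu Zs Hid rU.
pose C i : 'M[R]_(n, 3) := \matrix_(l < n, k < 3) a i l 0 k.
pose U := C i0.
have CE i i' : C i *m Z *m (C i')^T = C i' *m Z *m (C i)^T.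
  apply/matrixP => j k.
  have E1 i1 i2 j1 k1 : (C i1 *m Z *m (C i2)^T) j1 k1 = (a i1 j1 *m Z *m (a i2 k1)^T) 0 0.
    rewrite !mxE; apply: eq_bigr => q _; rewrite !mxE; congr (_ * _).
    by apply: eq_bigr => p _; rewrite !mxE.
  rewrite !E1 Hid.
  have -> : a i k *m Z *m (a i' j)^T = (a i k *m Z *m (a i' j)^T)^T.
    by rewrite tr11.
  by rewrite !trmx_mul trmxK Zs mulmxA.
have [B BU] : exists B : 'M[R]_(3, n), B *m U = 1%:M.
  by apply/row_fullP; rewrite /row_full rU.
pose T i := B *m C i.
have TE i : B *m C i = T i by [].
clearbody T.
have St1 i : Z *m (C i)^T = T i *m Z *m U^T.
  have := congr1 (mulmx B) (CE i0 i).
  by rewrite !mulmxA BU mul1mx TE.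
have St2 i : Z *m (T i)^T = T i *m Z.
  have := congr1 (mulmx^~ B^T) (St1 i).
  by rewrite -!mulmxA -!trmx_mul TE BU trmx1 mulmx1.
have St3 i : C i = U *m T i.
  have := congr1 trmx (St1 i).
  rewrite !trmx_mul !trmxK Zs St2 mulmxA => H.
  by rewrite -[C i]mulmx1 -(mulmxV Zu) mulmxA H -[_ *m Z *m invmx Z]mulmxA mulmxV // mulmx1.
have Tc i i' : T i *m T i' = T i' *m T i.
  have := congr1 (fun M => B *m M *m B^T) (CE i i').
  rewrite /= !St3 !trmx_mul !mulmxA BU !mul1mx -!mulmxA -trmx_mul BU trmx1 !mulmx1.
  rewrite !St2 !mulmxA => H.
  by rewrite -[LHS]mulmx1 -(mulmxV Zu) mulmxA H -[_ *m Z *m invmx Z]mulmxA mulmxV // mulmx1.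
have Sc i j : (T i)^T *m (T j)^T = (T j)^T *m (T i)^T.
  by rewrite -!trmx_mul Tc.
have [z z0 Hz] := common_eig Sc.
have PKE i j : PK a z i j = (z *m (C i)^T) 0 j.
  by rewrite !mxE; apply: eq_bigr => k _; rewrite !mxE mulrC.
pose r := z *m U^T.
have r0 : r != 0.
  apply: contra z0 => /eqP r0; apply/eqP.
  by rewrite -[z]mulmx1 -trmx1 -BU trmx_mul mulmxA -/r r0 mul0mx.
have [c Hc] := @fin_all_exists _ (fun=> R) (fun i c => z *m (T i)^T = c *: z) Hz.
exists z.
have -> : PK a z = (\col_i c i) *m r.
  apply/matrixP => i j; rewrite PKE St3 trmx_mul mulmxA Hc.
  rewrite !mxE big_ord1 !mxE mulr_sumr; apply: eq_bigr => k _; rewrite [in LHS]mxE mulrA.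
  by [].
apply/eqP; rewrite eqn_leq; apply/andP; split.
  by apply: leq_trans (mxrankM_maxl _ _) (rank_leq_col _).
rewrite lt0n mxrank_eq0; apply: contra r0 => /eqP H.
have : row i0 ((\col_i c i) *m r) = 0 by rewrite H row0.
have -> : row i0 ((\col_i c i) *m r) = c i0 *: r.
  by apply/rowP => j; rewrite !mxE big_ord1 !mxE.
move=> /eqP; rewrite scaler_eq0 => /orP [|//].
move=> /eqP ci0; move: (Hc i0).
rewrite -TE BU trmx1 mulmx1 ci0 scale0r => /eqP; by rewrite (negbTE z0).
Qed.

Unset Implicit Arguments.

Section Glue.
Variable R : realType.
Variables m n : nat.
Variable a : 'I_m -> 'I_n -> 'rV[R]_3.

Definition Om (p q r s : 'rV[R]_3) : 'M[R]_3 :=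
  outer p q + (outer p q)^T - outer r s - (outer r s)^T.

Definition Qm (k : minor_idx m n) : 'M[R]_3 :=
  if valid_minor k then
    Om (a k.1.1 k.2.1) (a k.1.2 k.2.2) (a k.1.1 k.2.2) (a k.1.2 k.2.1)
  else 0.

Lemma Om_sym p q r s : (Om p q r s)^T = Om p q r s.
Proof. by apply/matrixP => i j; rewrite !mxE; ring. Qed.

Lemma Qm_sym k : (Qm k)^T = Qm k.
Proof. by rewrite /Qm; case: ifP => _; rewrite ?Om_sym ?trmx0. Qed.

Lemma dotE (p w : 'rV[R]_3) : \sum_k p 0 k * w 0 k = \sum_i w 0 i * p 0 i.
Proof. by apply: eq_bigr => i _; rewrite mulrC. Qed.

Lemma qf_Qm k w : qf (Qm k) w =
   if valid_minor k then 2 * minor2 k (PK a w) else 0.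
Proof.
rewrite /Qm; case: ifP => _; last by rewrite /qf /bil big1 // => i _; rewrite big1 // => j _; rewrite mxE mulr0 mul0r.
rewrite /Om !qfB qfD !qf_tr !qf_outer /minor2 !mxE.
rewrite !(dotE (a _ _)) .
ring.
Qed.

Lemma fro_Qm Z k : Z^T = Z -> valid_minor k -> fro Z (Qm k) = 0 ->
  (a k.1.1 k.2.1 *m Z *m (a k.1.2 k.2.2)^T) 0 0 =
  (a k.1.1 k.2.2 *m Z *m (a k.1.2 k.2.1)^T) 0 0.
Proof.
move=> Zs vk; rewrite /Qm vk /Om !froBr froDr.
rewrite -[Z in fro Z (outer _ _)^T]Zs -[Z in fro Z (outer (a k.1.1 k.2.2) _)^T]Zs.
rewrite -!fro_trl !trmxK !fro_outer_gen => H.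
apply/eqP; rewrite -subr_eq0; apply/eqP.
have : 2 * ((a k.1.1 k.2.1 *m Z *m (a k.1.2 k.2.2)^T) 0 0 -
   (a k.1.1 k.2.2 *m Z *m (a k.1.2 k.2.1)^T) 0 0) = 0 by rewrite -H; ring.
by move/eqP; rewrite mulf_eq0 pnatr_eq0 /= => /eqP.
Qed.

Lemma getZ :
  ~ (exists beta : minor_idx m n -> R,
    (exists k, valid_minor k /\ beta k != 0) /\
    (forall z : 'rV[R]_3, 0 <= minor_comb beta (PK a z)) /\
    (exists z : 'rV[R]_3, minor_comb beta (PK a z) != 0)) ->
  exists Z : 'M[R]_3, Z \in unitmx /\ Z^T = Z /\
    (forall i i' j k, a i j *m Z *m (a i' k)^T = a i k *m Z *m (a i' j)^T).
Proof.
move=> NG.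
pose M : 'M[R]_(#|{: minor_idx m n}|, 3 * 3) :=
  \matrix_(k < #|{: minor_idx m n}|) mxvec (Qm (enum_val k)).
have rowM k : vec_mx (row k M) = Qm (enum_val k) by rewrite rowK mxvecK.
have Hsym k : (vec_mx (row k M))^T = vec_mx (row k M) by rewrite rowM Qm_sym.
have H y : (y <= M)%MS -> (forall w, 0 <= qf (vec_mx y) w) -> forall w, qf (vec_mx y) w = 0.
  move=> /submxP [be ->] hpos.
  pose bet (kk : minor_idx m n) := be 0 (enum_rank kk).
  have qE w : qf (vec_mx (be *m M)) w = 2 * minor_comb bet (PK a w).
    rewrite mulmx_sum_row linear_sum qf_sum.
    rewrite (eq_bigr (fun k => be 0 k * qf (Qm (enum_val k)) w)); last first.
      by move=> k _; rewrite linearZ /= qfZ rowM.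
    rewrite (reindex (@enum_rank _)) /=; last by apply: onW_bij; exact: enum_rank_bij.
    rewrite /minor_comb mulr_sumr [RHS]big_mkcond; apply: eq_bigr => kk _.
    rewrite enum_rankK qf_Qm /bet; case: ifP => _; [ring | by rewrite mulr0].
  move=> w; apply/eqP; apply: contraT => hw; exfalso; apply: NG.
  exists bet; split; last split.
  - case: (boolP [exists kk, valid_minor kk && (bet kk != 0)]).
      by move=> /existsP [kk /andP [h1 h2]]; exists kk.
    rewrite negb_exists => /forallP hall.
    move: hw; rewrite qE /minor_comb big1 ?mulr0 ?eqxx // => kk vk.
    by move: (hall kk); rewrite vk /= negbK => /eqP ->; rewrite mul0r.
  - move=> z; have := hpos z; rewrite qE; nra.
  - by exists w; move: hw; rewrite qE mulf_eq0 negb_or => /andP [].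
have [Z [ZPD [Zs ZQ]]] := dual _ _ M Hsym H.
exists Z; split.
  rewrite unitmxE unitfE; apply/negP => /det0P [v v0 vZ].
  have := ZPD v v0; rewrite /qf /bil.
  have -> : \sum_i \sum_j v 0 i * Z i j * v 0 j = 0.
    rewrite (eq_bigr (fun i => v 0 i * (v *m Z^T) 0 i)); last first.
      move=> i _; rewrite !mxE mulr_sumr; apply: eq_bigr => j _; rewrite !mxE; ring.
    by rewrite Zs vZ big1 // => i _; rewrite mxE mulr0.
  by rewrite ltxx.
split => //.
pose g (i : 'I_m) (j : 'I_n) (i' : 'I_m) (k : 'I_n) := (a i j *m Z *m (a i' k)^T) 0 0.
have gsym (i : 'I_m) (j : 'I_n) (i' : 'I_m) (k : 'I_n) : g i j i' k = g i' k i j.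
  rewrite /g -(tr11 (a i j *m Z *m (a i' k)^T)).
  by rewrite !trmx_mul trmxK Zs mulmxA.
have gv (i i' : 'I_m) (j k : 'I_n) : (i < i')%N -> (j < k)%N -> g i j i' k = g i k i' j.
  move=> h1 h2; have := ZQ (enum_rank ((i, i'), (j, k))).
  rewrite rowM enum_rankK => /fro_Qm.
  by rewrite /valid_minor /= h1 h2 => /(_ Zs isT).
have gall (i i' : 'I_m) (j k : 'I_n) : g i j i' k = g i k i' j.
  case: (ltngtP i i') => hi; case: (ltngtP j k) => hj.
  - exact: gv.
  - by rewrite (gv _ _ _ _ hi hj).
  - by rewrite (ord_inj hj).
  - by rewrite gsym -(gv _ _ _ _ hi hj) gsym.
  - by rewrite gsym (gv _ _ _ _ hi hj) gsym.
  - by rewrite (ord_inj hj).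
  - by rewrite (ord_inj hi) gsym.
  - by rewrite (ord_inj hi) gsym.
  - by rewrite (ord_inj hj).
move=> i i' j k.
by rewrite [LHS]mx11_scalar [RHS]mx11_scalar; have := gall i i' j k; rewrite /g => ->.
Qed.

End Glue.

Lemma PK0 (R : realType) m n (a : 'I_m -> 'I_n -> 'rV[R]_3) : PK a 0 = 0.
Proof. by apply/matrixP => i j; rewrite !mxE big1 // => k _; rewrite mxE mulr0. Qed.

Theorem lemma7 (R : realType) (m n : nat) (a : 'I_m -> 'I_n -> 'rV[R]_3) :
  injective (PK a) ->
  ~ has_rank1_connections (fun X => exists z, X = PK a z) ->
  ((exists i0 : 'I_m, \rank (\matrix_(l < n, k < 3) a i0 l 0 k) = 3%N) \/
   (exists j0 : 'I_n, \rank (\matrix_(l < m, k < 3) a l j0 0 k) = 3%N)) ->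
  exists beta : minor_idx m n -> R,
    (exists k, valid_minor k /\ beta k != 0) /\
    (forall z : 'rV[R]_3, 0 <= minor_comb beta (PK a z)) /\
    (exists z : 'rV[R]_3, minor_comb beta (PK a z) != 0).
Proof.
move=> _ norank hspan.
apply: Classical_Prop.NNPP => NG.
have [Z [Zu [Zs Hid]]] := getZ _ _ _ a NG.
have [z rz] : exists z, \rank (PK a z) = 1%N.
  case: hspan => [[i0 hi0] | [j0 hj0]].
    exact: (rank1_from_Z Zu Zs Hid hi0).
  pose a' := fun (j : 'I_n) (i : 'I_m) => a i j.
  have Hid' j j' i i' : a' j i *m Z *m (a' j' i')^T = a' j i' *m Z *m (a' j' i)^T.
    rewrite /a' Hid.
    rewrite -(tr11 (a i' j *m Z *m (a i j')^T)) !trmx_mul trmxK Zs mulmxA.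
    by rewrite Hid.
  have [z hz] := rank1_from_Z Zu Zs Hid' hj0.
  exists z; rewrite -mxrank_tr -hz; congr (\rank _).
  by apply/matrixP => i j; rewrite !mxE.
apply: norank; exists (PK a z), (PK a 0); split; first by exists z.
split; first by exists 0.
rewrite PK0 subr0; split => // E.
by move: rz; rewrite E mxrank0.
Qed.
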